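(* Let $n=2r+1$, $\mathcal D=\mathbb F_q^{2d+1}$ with a non-degenerate symmetric bilinear form $Q$, let $\mathcal D''\subseteq\mathcal D$ be an isotropic subspace of dimension $s$, and let $L=(L_i)_{0\le i\le n}$ be an $n$-step flag $0=L_0\subseteq L_1\subseteq\cdots\subseteq L_n=\mathcal D$ with $L_i=L_j^\perp$ whenever $i+j=n$. Then there exist subspaces $T,W\subseteq\mathcal D$ such that: (a) $\mathcal D=\mathcal D''\oplus T\oplus W$ and $(\mathcal D'')^\perp=\mathcal D''\oplus T$; (b) $W$ is isotropic and $T\perp W$; (c) there are bases $\{z_1,\dots,z_s\}$ of $\mathcal D''$ and $\{w_1,\dots,w_s\}$ of $W$ with $Q(z_i,w_j)=\delta_{ij}$; (d) $L_i=(L_i\cap\mathcal D'')\oplus(L_i\cap T)\oplus(L_i\cap W)$ for all $1\le i\le n-1$.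
   Context: $q$ is a power of an odd prime. $W^\perp$ denotes the orthogonal complement with respect to $Q$; a subspace $W$ is isotropic if $W\subseteq W^\perp$. *)

(* Defs.v *)
(* subspaces of F^N are represented by (row spaces of) matrices, mxalgebra. *)
From HB Require Import structures.
From mathcomp Require Import all_boot all_order all_algebra all_field.
Set Implicit Arguments. Unset Strict Implicit. Unset Printing Implicit Defensive.
Import GRing.Theory.
Local Open Scope ring_scope.

Definition bform (F : fieldType) (N : nat) (Qm : 'M[F]_N) (u v : 'rV[F]_N) : F :=
  (u *m Qm *m v^T) 0 0.

(* Orthogonal complement of the row space of A w.r.t. Qm:
   the rows u with u *m Qm *m A^T = 0, i.e. Q(u,a) = 0 for every row a of A. *)
Definition perpmx (F : fieldType) (N m : nat) (Qm : 'M[F]_N) (A : 'M[F]_(m, N)) : 'M[F]_N :=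
  kermx (Qm *m A^T).

(* Main.v *)
Require Import Defs.
From HB Require Import structures.
From mathcomp Require Import all_boot all_order all_algebra all_field.
From mathcomp Require Import ring zify.
Set Implicit Arguments. Unset Strict Implicit. Unset Printing Implicit Defensive.
Import GRing.Theory.
Local Open Scope ring_scope.

Lemma orthP (F : fieldType) (N m1 m2 p1 p2 : nat) (Q : 'M[F]_N)
  (X : 'M_(m1,N)) (Y : 'M_(m2,N)) (A : 'M_(p1,N)) (B : 'M_(p2,N)) :
  (X <= perpmx Q Y)%MS -> (A <= X)%MS -> (B <= Y)%MS -> A *m (Q *m B^T) = 0.
Proof.
move=> /sub_kermxP XY /submxP[a ->] /submxP[b ->].
by rewrite trmx_mul (mulmxA Q) -mulmxA (mulmxA X) XY mul0mx mulmx0.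
Qed.

Lemma perpI (F : fieldType) (N m p : nat) (Q : 'M[F]_N) (X : 'M_(m,N)) (A : 'M_(p,N)) :
  A *m (Q *m X^T) = 0 -> (A <= perpmx Q X)%MS.
Proof. by move=> H; apply/sub_kermxP. Qed.

Lemma trQ (F : fieldType) (N m p : nat) (Q : 'M[F]_N) (A : 'M_(m,N)) (B : 'M_(p,N)) :
  Q^T = Q -> (A *m (Q *m B^T))^T = B *m (Q *m A^T).
Proof. by move=> Qs; rewrite !trmx_mul trmxK Qs -mulmxA. Qed.

Lemma trB (F : fieldType) (m n : nat) (A B : 'M[F]_(m,n)) : (A - B)^T = A^T - B^T.
Proof. exact: linearB. Qed.

Lemma trZ (F : fieldType) (m n : nat) (a : F) (A : 'M[F]_(m,n)) : (a *: A)^T = a *: A^T.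
Proof. exact: linearZ. Qed.

Lemma subB (F : fieldType) (m1 m2 n : nat) (A B : 'M[F]_(m1,n)) (C : 'M_(m2,n)) :
  (A <= C)%MS -> (B <= C)%MS -> (A - B <= C)%MS.
Proof. by move=> hA hB; apply: addmx_sub => //; rewrite (eqmx_opp B). Qed.

Lemma stab (F : fieldType) (m1 m2 n : nat) (A : 'M[F]_(m1,n)) (X : 'M_(m2,n)) (E : 'M_n) :
  (A <= X)%MS -> (X *m E <= X)%MS -> (A *m E <= X)%MS.
Proof. by move=> /submxP[y ->] h; rewrite -mulmxA; exact: submx_trans (submxMl _ _) h. Qed.

Lemma mono (F : fieldType) (N n : nat) (L : nat -> 'M[F]_N) :
  (forall i, (i < n)%N -> (L i <= L i.+1)%MS) ->
  forall i j, (i <= j)%N -> (j <= n)%N -> (L i <= L j)%MS.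
Proof.
move=> H i j; elim: j => [|j IH].
  by rewrite leqn0 => /eqP -> _; exact: submx_refl.
rewrite leq_eqVlt => /orP [/eqP -> _|]; first exact: submx_refl.
rewrite ltnS => ij jn; exact: submx_trans (IH ij (ltnW jn)) (H j jn).
Qed.

Definition inv (F : fieldType) (N n m : nat) (Q D2 : 'M[F]_N) (L : nat -> 'M[F]_N)
   (Z Wb : 'M[F]_(m,N)) :=
 [/\ (Z <= D2)%MS, Wb *m (Q *m Wb^T) = 0, Z *m (Q *m Wb^T) = 1%:M &
   forall i, (i <= n)%N -> (L i *m (Q *m Wb^T *m Z) <= L i)%MS /\ (L i *m (Q *m Z^T *m Wb) <= L i)%MS].

Lemma step (F : fieldType) (N n s m : nat) (Q D2 : 'M[F]_N) (L : nat -> 'M[F]_N) (Z Wb : 'M[F]_(m,N)) :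
  Q^T = Q -> (2%:R : F) != 0 -> (D2 <= perpmx Q D2)%MS -> \rank D2 = s ->
  (L 0 == (0 : 'M_N))%MS -> (L n == (1%:M : 'M_N))%MS ->
  (forall i j, (i <= j)%N -> (j <= n)%N -> (L i <= L j)%MS) ->
  (forall i j, (i + j = n)%N -> (L i == perpmx Q (L j))%MS) ->
  inv n Q D2 L Z Wb -> (m < s)%N ->
  exists (z w : 'rV[F]_N), inv n Q D2 L (col_mx z Z) (col_mx w Wb).
Proof.
move=> Qs H2 D2iso D2rk L0 Ln Lmono Lperp [ZD2 WQW ZQW Lst] ms.
have ZQZ : Z *m (Q *m Z^T) = 0 := orthP D2iso ZD2 ZD2.
have WQZ : Wb *m (Q *m Z^T) = 1%:M by rewrite -(trQ _ _ Qs) ZQW trmx1.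
have [z0 z0D2 z0Z] : exists2 z0 : 'rV_N, (z0 <= D2)%MS & ~~ (z0 <= Z)%MS.
  case: (boolP (D2 <= Z)%MS) => [/mxrankS|/row_subPn[i Hi]]; last first.
    by exists (row i D2) => //; exact: row_sub.
  rewrite D2rk => /leq_trans/(_ (rank_leq_row Z)); by rewrite leqNgt ms.
pose z := z0 - z0 *m (Q *m Wb^T *m Z).
have zD2 : (z <= D2)%MS.
  apply: subB => //; rewrite mulmxA; exact: submx_trans (submxMl _ _) ZD2.
have znz : z != 0.
  apply: contraNneq z0Z; rewrite /z => /eqP; rewrite subr_eq0 => /eqP ->.
  by rewrite mulmxA submxMl.
have zW : z *m (Q *m Wb^T) = 0.
  by rewrite /z mulmxBl -!mulmxA ZQW mulmx1 subrr.
have zZ : z *m (Q *m Z^T) = 0 := orthP D2iso zD2 ZD2.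
have zz : z *m (Q *m z^T) = 0 := orthP D2iso zD2 zD2.
have Zz : Z *m (Q *m z^T) = 0 by rewrite -(trQ _ _ Qs) zZ trmx0.
have Wz : Wb *m (Q *m z^T) = 0 by rewrite -(trQ _ _ Qs) zW trmx0.
have exa : exists a, (z <= L a)%MS.
  by exists n; case/andP: Ln => _ h; exact: submx_trans (submx1 z) h.
case: (ex_minnP exa) => a za amin.
have an : (a <= n)%N by apply: amin; case/andP: Ln => _ h; exact: submx_trans (submx1 z) h.
case: a za amin an => [|a'] za amin an.
  by case/andP: L0 => /(submx_trans za); rewrite submx0 (negbTE znz).
pose b := (n - a')%N.
have a'b : (a' + b = n)%N by rewrite /b subnKC // ltnW.
have za' : ~~ (z <= L a')%MS by apply/negP => /amin; rewrite ltnn.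
have zLb : ~~ (z <= perpmx Q (L b))%MS.
  apply: contra za' => h; apply: submx_trans h _.
  by case/andP: (Lperp _ _ a'b) => _ ->.
have Mnz : z *m (Q *m (L b)^T) != 0 by apply: contra zLb => /eqP h; exact: perpI.
have [j Hj] : exists j, col j (z *m (Q *m (L b)^T)) != 0.
  case: (pickP (fun j => col j (z *m (Q *m (L b)^T)) != 0)) => [j Hj|H0]; first by exists j.
  case/eqP: Mnz; apply/matrixP => i k; move: (H0 k) => /negbFE/eqP/matrixP/(_ i 0).
  by rewrite !mxE.
pose u := row j (L b).
have ub : (u <= L b)%MS := row_sub j (L b).
have zu : z *m (Q *m u^T) = col j (z *m (Q *m (L b)^T)).
  by rewrite /u tr_row !colE !mulmxA.
pose c := (z *m (Q *m u^T)) 0 0.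
have cnz : c != 0.
  apply: contra Hj => /eqP c0; rewrite -zu (mx11_scalar (z *m _)) -/c c0.
  by apply/eqP/matrixP => i k; rewrite !mxE mul0rn.
have bn : (b <= n)%N by rewrite /b leq_subr.
pose u1 := u - u *m (Q *m Wb^T *m Z) - u *m (Q *m Z^T *m Wb).
have u1b : (u1 <= L b)%MS.
  apply: subB; [apply: subB => // |]; apply: stab ub _; by case: (Lst b bn).
have u1Z : u1 *m (Q *m Z^T) = 0.
  by rewrite /u1 !mulmxBl -!mulmxA ZQZ WQZ mulmx0 mulmx1 !mulmx0 subr0 subrr.
have u1W : u1 *m (Q *m Wb^T) = 0.
  by rewrite /u1 !mulmxBl -!mulmxA ZQW WQW mulmx0 mulmx1 !mulmx0 subr0 subrr.
have u1z : u1 *m (Q *m z^T) = u *m (Q *m z^T).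
  by rewrite /u1 !mulmxBl -!mulmxA Zz Wz !mulmx0 !subr0.
have zu1 : z *m (Q *m u1^T) = c%:M.
  by rewrite -(trQ _ _ Qs) u1z (trQ _ _ Qs) /c -mx11_scalar.
pose v := c^-1 *: u1.
have zv : z *m (Q *m v^T) = 1%:M.
  by rewrite /v trZ -!scalemxAr zu1 scale_scalar_mx mulVf.
have vZ : v *m (Q *m Z^T) = 0 by rewrite /v -scalemxAl u1Z scaler0.
have vW : v *m (Q *m Wb^T) = 0 by rewrite /v -scalemxAl u1W scaler0.
have vz : v *m (Q *m z^T) = 1%:M by rewrite -(trQ _ _ Qs) zv trmx1.
have vb : (v <= L b)%MS by apply: scalemx_sub.
clearbody v.
pose e := (v *m (Q *m v^T)) 0 0 / 2%:R.
pose w := v - e *: z.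
have wb : (w <= L b)%MS.
  case: (leqP a'.+1 b) => ab.
    apply: subB => //; apply: scalemx_sub; exact: submx_trans za (Lmono _ _ ab bn).
  have vv : v *m (Q *m v^T) = 0.
    have h1 : (L b <= perpmx Q (L b))%MS.
      apply: submx_trans (Lmono b a' _ _) _; [by rewrite -ltnS|by rewrite ltnW|].
      by case/andP: (Lperp _ _ a'b) => ->.
    exact: (orthP h1 vb vb).
  by rewrite /w /e vv mxE mul0r scale0r subr0.
have zw : z *m (Q *m w^T) = 1%:M.
  by rewrite /w trB (trZ e z) !mulmxBr -!scalemxAr zz zv scaler0 subr0.
have wZ : w *m (Q *m Z^T) = 0 by rewrite /w mulmxBl -scalemxAl zZ vZ scaler0 subr0.
have wW : w *m (Q *m Wb^T) = 0 by rewrite /w mulmxBl -scalemxAl zW vW scaler0 subr0.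
have ww : w *m (Q *m w^T) = 0.
  rewrite /w trB (trZ e z) !mulmxBl !mulmxBr -!scalemxAr -!scalemxAl.
  rewrite zz vz zv !scaler0 subr0 (mx11_scalar (v *m _)) /e.
  move: ((v *m (Q *m v^T)) 0 0) => x.
  apply/matrixP => i k; rewrite !ord1 !mxE eqxx /=.
  by rewrite mulr1n mulr1 -addrA -opprD -mulr2n -(mulr_natr (x / 2%:R) 2) divfK // subrr.
have Zw : Z *m (Q *m w^T) = 0 by rewrite -(trQ _ _ Qs) wZ trmx0.
have Ww : Wb *m (Q *m w^T) = 0 by rewrite -(trQ _ _ Qs) wW trmx0.
exists z, w; split.
- by rewrite col_mx_sub zD2 ZD2.
- by rewrite tr_col_mx mul_mx_row mul_col_row ww wW Ww WQW block_mx0.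
- by rewrite tr_col_mx mul_mx_row mul_col_row zw zW Zw ZQW -scalar_mx_block.
move=> i hi; have [Lz Lw] := Lst i hi; split.
- rewrite tr_col_mx mul_mx_row mul_row_col mulmxDr; apply: addmx_sub => //.
  case: (leqP a'.+1 i) => ai.
    rewrite mulmxA; apply: submx_trans (submxMl _ _) _.
    exact: submx_trans za (Lmono _ _ ai hi).
  rewrite mulmxA; have -> : L i *m (Q *m w^T) = 0.
    have h1 : (L i <= perpmx Q (L (n - i)%N))%MS.
      by case/andP: (Lperp i (n - i)%N (subnKC hi)) => ->.
    have h3 : (w <= L (n - i)%N)%MS.
      apply: submx_trans wb (Lmono _ _ _ _); [rewrite /b; apply: leq_sub2l; by rewrite -ltnS|exact: leq_subr].
    exact: (orthP h1 (submx_refl _) h3).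
  by rewrite mul0mx sub0mx.
- rewrite tr_col_mx mul_mx_row mul_row_col mulmxDr; apply: addmx_sub => //.
  case: (leqP b i) => bi.
    rewrite mulmxA; apply: submx_trans (submxMl _ _) _.
    exact: submx_trans wb (Lmono _ _ bi hi).
  rewrite mulmxA; have -> : L i *m (Q *m z^T) = 0.
    have h1 : (L (n - a'.+1)%N <= perpmx Q (L a'.+1))%MS.
      by case/andP: (Lperp (n - a'.+1)%N a'.+1 (subnK an)) => ->.
    have h2 : (L i <= L (n - a'.+1)%N)%MS.
      apply: Lmono; last exact: leq_subr.
      by move: bi; rewrite /b subnS; case: (n - a')%N.
    exact: (orthP h1 h2 za).
  by rewrite mul0mx sub0mx.
Qed.

Lemma build (F : fieldType) (N n s : nat) (Q D2 : 'M[F]_N) (L : nat -> 'M[F]_N) :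
  Q^T = Q -> (2%:R : F) != 0 -> (D2 <= perpmx Q D2)%MS -> \rank D2 = s ->
  (L 0 == (0 : 'M_N))%MS -> (L n == (1%:M : 'M_N))%MS ->
  (forall i j, (i <= j)%N -> (j <= n)%N -> (L i <= L j)%MS) ->
  (forall i j, (i + j = n)%N -> (L i == perpmx Q (L j))%MS) ->
  forall m, (m <= s)%N -> exists Z Wb : 'M[F]_(m,N), inv n Q D2 L Z Wb.
Proof.
move=> Qs H2 D2iso D2rk L0 Ln Lmono Lperp; elim => [_|m IH ms].
  exists 0, 0; split.
  - exact: sub0mx.
  - by rewrite mul0mx.
  - by apply/matrixP => -[].
  - by move=> i _; rewrite ?trmx0 ?mulmx0 ?mul0mx ?mulmx0 !sub0mx.
have [Z [Wb H]] := IH (ltnW ms).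
have [z [w H']] := step Qs H2 D2iso D2rk L0 Ln Lmono Lperp H ms.
by exists (col_mx z Z), (col_mx w Wb).
Qed.

Theorem mainTheorem12
  (F : finFieldType) (p k q : nat)
  (Hp : prime p) (Hpodd : odd p) (Hk : (0 < k)%N) (Hq : q = (p ^ k)%N) (HF : #|F| = q)
  (d r s : nat) (Qm : 'M[F]_(2 * d + 1))
  (Qsym : Qm^T = Qm) (Qnd : Qm \in unitmx)
  (D2 : 'M[F]_(2 * d + 1))
  (D2iso : (D2 <= perpmx Qm D2)%MS) (D2dim : \rank D2 = s)
  (L : nat -> 'M[F]_(2 * d + 1))
  (L0 : (L 0%N == (0 : 'M[F]_(2 * d + 1)))%MS) (Ln : (L (2 * r + 1)%N == (1%:M : 'M[F]_(2 * d + 1)))%MS)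
  (Lmono : forall i, (i < 2 * r + 1)%N -> (L i <= L i.+1)%MS)
  (Lperp : forall i j, (i + j = 2 * r + 1)%N -> (L i == perpmx Qm (L j))%MS) :
  exists T W : 'M[F]_(2 * d + 1),
    [/\ (* (a) *)
        mxdirect (D2 + T + W) /\ (D2 + T + W == (1%:M : 'M[F]_(2 * d + 1)))%MS /\ (perpmx Qm D2 == D2 + T)%MS,
        (* (b) *)
        (W <= perpmx Qm W)%MS /\ (T <= perpmx Qm W)%MS,
        (* (c) *)
        (exists Z Wb : 'M[F]_(s, 2 * d + 1),
           [/\ row_free Z, (Z == D2)%MS, row_free Wb, (Wb == W)%MS
             & forall i j : 'I_s, bform Qm (row i Z) (row j Wb) = (i == j)%:R])
      & (* (d) *)
        forall i, (1 <= i)%N -> (i <= 2 * r)%N ->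
          mxdirect ((L i :&: D2) + (L i :&: T) + (L i :&: W)) /\
          (L i == (L i :&: D2) + (L i :&: T) + (L i :&: W))%MS].
Proof.
have H2 : (2%:R : F) != 0.
  have pc := card_finPcharP (etrans HF Hq) Hp.
  rewrite -(dvdn_pcharf pc); apply/negP => /(dvdn_leq (isT : (0 < 2)%N)) p2.
  have p2' : p = 2%N by apply/eqP; rewrite eqn_leq p2 prime_gt1.
  by rewrite p2' in Hpodd.
have Lm := mono Lmono.
have [Z [Wb [ZD2 WQW ZQW Lst]]] := build Qsym H2 D2iso D2dim L0 Ln Lm Lperp (leqnn s).
have ZQZ : Z *m (Qm *m Z^T) = 0 := orthP D2iso ZD2 ZD2.
have WQZ : Wb *m (Qm *m Z^T) = 1%:M by rewrite -(trQ _ _ Qsym) ZQW trmx1.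
have rkZ : \rank Z = s.
  apply/eqP; rewrite eqn_leq rank_leq_row /=.
  by have := mxrankM_maxl Z (Qm *m Wb^T); rewrite ZQW mxrank1.
have rkW : \rank Wb = s.
  apply/eqP; rewrite eqn_leq rank_leq_row /=.
  by have := mxrankM_maxl Wb (Qm *m Z^T); rewrite WQZ mxrank1.
have eqZ : (Z == D2)%MS by rewrite -(mxrank_leqif_eq ZD2).2 rkZ D2dim.
have D2Z : (D2 <= Z)%MS by case/andP: eqZ.
pose T := perpmx Qm (col_mx Z Wb).
have [TZ TW] : T *m (Qm *m Z^T) = 0 /\ T *m (Qm *m Wb^T) = 0.
  have /sub_kermxP := submx_refl T.
  rewrite tr_col_mx !mul_mx_row => /eqP; rewrite row_mx_eq0 => /andP[/eqP h1 /eqP h2].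
  by split.
have Tin : forall p0 (A : 'M_(p0, 2 * d + 1)), A *m (Qm *m Z^T) = 0 -> A *m (Qm *m Wb^T) = 0 -> (A <= T)%MS.
  by move=> p0 A h1 h2; apply/sub_kermxP; rewrite tr_col_mx !mul_mx_row h1 h2 row_mx0.
have TZ' : forall p0 (A : 'M_(p0, 2 * d + 1)), (A <= T)%MS -> A *m (Qm *m Z^T) = 0 /\ A *m (Qm *m Wb^T) = 0.
  by move=> p0 A /submxP[y ->]; split; rewrite -mulmxA ?TZ ?TW mulmx0.
pose Ez := Qm *m Wb^T *m Z; pose Ew := Qm *m Z^T *m Wb; pose Et := 1%:M - (Ez + Ew).
have E1 : Ez + Ew + Et = 1%:M by rewrite /Et addrC subrK.
have EtT : (Et <= T)%MS.
  apply: Tin; rewrite /Et /Ez /Ew mulmxBl mul1mx mulmxDl -!mulmxA.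
    by rewrite ZQZ WQZ !mulmx0 mulmx1 add0r subrr.
  by rewrite ZQW WQW !mulmx0 mulmx1 addr0 subrr.
have EzZ : forall p0 (A : 'M_(p0, 2 * d + 1)), (A *m Ez <= Z)%MS by move=> p0 A; rewrite /Ez mulmxA submxMl.
have EwW : forall p0 (A : 'M_(p0, 2 * d + 1)), (A *m Ew <= Wb)%MS by move=> p0 A; rewrite /Ew mulmxA submxMl.
have EtT' : forall p0 (A : 'M_(p0, 2 * d + 1)), (A *m Et <= T)%MS by move=> p0 A; exact: submx_trans (submxMl A Et) EtT.
have decomp : forall p0 (A : 'M_(p0, 2 * d + 1)), A = A *m Ez + A *m Et + A *m Ew.
  by move=> p0 A; rewrite -!mulmxDr -addrA (addrC Et) addrA E1 mulmx1.
have dir3 : forall p1 p2 p3 (A : 'M_(p1, 2 * d + 1)) (B : 'M_(p2, 2 * d + 1)) (C : 'M_(p3, 2 * d + 1)),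
    (A <= Z)%MS -> (B <= T)%MS -> (C <= Wb)%MS -> mxdirect (A + B + C).
  move=> p1 p2 p3 A B C hA hB hC.
  rewrite mxdirect_addsE /= mxdirect_addsE /=.
  apply/and3P; split; [apply/and3P; split| exact: mxdirect_trivial |].
  - exact: mxdirect_trivial.
  - exact: mxdirect_trivial.
  - apply/eqP; set X := (A :&: B)%MS.
    have /submxP[y Xy] : (X <= Z)%MS by apply: submx_trans (capmxSl _ _) hA.
    have [_ XW] := TZ' _ X (submx_trans (capmxSr A B) hB).
    by move: XW; rewrite Xy -mulmxA ZQW mulmx1 => ->; rewrite mul0mx.
  - apply/eqP; set X := ((A + B) :&: C)%MS.
    have /submxP[y Xy] : (X <= Wb)%MS by apply: submx_trans (capmxSr _ _) hC.
    have /sub_addsmxP[[u1 u2] /= Xu] : (X <= Z + T)%MS.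
      by apply: submx_trans (capmxSl _ _) (addsmxS hA hB).
    have : X *m (Qm *m Z^T) = 0.
      rewrite Xu mulmxDl (TZ' _ _ (submxMl u2 T)).1 -mulmxA ZQZ mulmx0 addr0 //.
    by rewrite Xy -mulmxA WQZ mulmx1 => ->; rewrite mul0mx.
have EzD2 : forall p0 (A : 'M_(p0, 2 * d + 1)), (A *m Ez <= D2)%MS.
  by move=> p0 A; exact: submx_trans (EzZ _ A) ZD2.
pose W := (<<Wb>>)%MS.
have genW : (W <= Wb)%MS by rewrite genmxE.
have Wgen : (Wb <= W)%MS by rewrite genmxE.
exists T, W; split.
- split; first exact: dir3 D2Z (submx_refl T) genW.
  split.
    apply/andP; split; first exact: submx1.
    rewrite (decomp _ 1%:M); apply: addmx_sub_adds; [apply: addmx_sub_adds|].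
    + exact: EzD2.
    + exact: EtT'.
    + exact: submx_trans (EwW _ _) Wgen.
  apply/andP; split.
    set P := perpmx Qm D2.
    have PEw : P *m Ew = 0.
      by rewrite /Ew mulmxA (orthP (submx_refl P) (submx_refl P) ZD2) mul0mx.
    rewrite (decomp _ P) PEw addr0; exact: addmx_sub_adds.
  rewrite addsmx_sub D2iso /=; apply: perpI.
  by case/submxP: D2Z => y ->; rewrite trmx_mul !mulmxA -(mulmxA T) TZ mul0mx.
- split; apply: perpI.
    exact: (orthP (perpI WQW) genW genW).
  exact: (orthP (perpI TW) (submx_refl T) genW).
- exists Z, Wb; split => //.
  + by rewrite /row_free rkZ.
  + by rewrite /row_free rkW.
  + by apply/andP.
  move=> i j; rewrite /bform.
  transitivity ((row i (col j (Z *m (Qm *m Wb^T)))) 0 0).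
    by congr (_ 0 0); rewrite rowE colE tr_row colE rowE !mulmxA.
  by rewrite ZQW !mxE.
move=> i hi1 hi2.
have hi : (i <= 2 * r + 1)%N by rewrite addn1 leqW.
have [Lz Lw] := Lst i hi; split.
  apply: dir3; [exact: submx_trans (capmxSr _ _) D2Z|exact: capmxSr|exact: submx_trans (capmxSr _ _) genW].
apply/andP; split; last by rewrite !addsmx_sub !capmxSl.
rewrite {1}(decomp _ (L i)); apply: addmx_sub_adds; [apply: addmx_sub_adds|];
  rewrite sub_capmx; apply/andP; split.
- exact: Lz.
- exact: EzD2.
- by rewrite /Et mulmxBr mulmx1 mulmxDr; apply: subB; [exact: submx_refl|exact: addmx_sub].
- exact: EtT'.
- exact: Lw.
- exact: submx_trans (EwW _ _) Wgen.
Qed.
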